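(* Let $F\ge2$ and $K\ge1$ be integers, and write $K=\ell F+i$ with integers $\ell\ge0$ and $0\le i<F$. Then $$s(F,K,1)=\frac{\ell F(F-1)}{2}+\frac{i(i-1)}{2}+i(F-i).$$
   Context: A placement delivery array $S$-PDA$(F,K,Z)$ is an $F\times K$ array $R=(r_{j,k})$, $1\le j\le F$, $1\le k\le K$, over a finite set $S$ such that: (1) each cell is either empty or contains an element of $S$; (2) each column contains exactly $Z$ empty cells; (3) each element of $S$ occurs at most once in each row and at most once in each column; (4) if two distinct nonempty cells satisfy $r_{j_1,k_1}=r_{j_2,k_2}=t\in S$, then the cells $r_{j_1,k_2}$ and $r_{j_2,k_1}$ are empty. For integers $F,K\ge1$, $0\le Z\le F$, define $s(F,K,Z)=\min\{|S| : \text{there exists an } S\text{-PDA}(F,K,Z)\}$. *)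

(* Defs.v *)
From mathcomp Require Import all_boot.
Set Implicit Arguments. Unset Strict Implicit. Unset Printing Implicit Defensive.

(* An F x K array over S: cell (j,k) is None (empty) or Some t. *)
Definition is_PDA (S : finType) (F K Z : nat) (R : 'I_F -> 'I_K -> option S) : Prop :=
  (forall k : 'I_K, #|[set j : 'I_F | R j k == None]| = Z) /\
  (forall (j : 'I_F) (k1 k2 : 'I_K) (t : S),
      R j k1 = Some t -> R j k2 = Some t -> k1 = k2) /\
  (forall (j1 j2 : 'I_F) (k : 'I_K) (t : S),
      R j1 k = Some t -> R j2 k = Some t -> j1 = j2) /\
  (forall (j1 j2 : 'I_F) (k1 k2 : 'I_K) (t : S),
      (j1, k1) <> (j2, k2) -> R j1 k1 = Some t -> R j2 k2 = Some t ->
      R j1 k2 = None /\ R j2 k1 = None).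

(* s(F,K,Z) = m : m is the minimum size of a symbol set S admitting an
   S-PDA(F,K,Z). *)
Definition is_min_PDA_size (F K Z m : nat) : Prop :=
  (exists R : 'I_F -> 'I_K -> option 'I_m, @is_PDA _ F K Z R) /\
  (forall (S : finType) (R : 'I_F -> 'I_K -> option S), @is_PDA S F K Z R -> m <= #|S|).

(* Main.v *)
Require Import Defs.
From mathcomp Require Import all_boot zify.
Set Implicit Arguments. Unset Strict Implicit. Unset Printing Implicit Defensive.
Definition phi (F x : nat) := x * (F - x).

Lemma phi_step F r c : 0 < F -> r < F -> c <= F ->
  phi F ((r + c) %% F) <= phi F r + phi F c.
Proof.
move=> F0 rF cF; rewrite /phi.
case: (ltnP (r + c) F) => h.
  rewrite modn_small //. nia.
have -> : (r + c) %% F = r + c - F.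
  have -> : r + c = (r + c - F) + F by lia.
  rewrite modnDr modn_small //; lia.
nia.
Qed.

Definition Dsum F (n : 'I_F -> nat) := \sum_(a < F) \sum_(b < F) (n b - n a).

Lemma sum_ord1 F : \sum_(a < F) 1 = F.
Proof. by rewrite sum_nat_const card_ord muln1. Qed.

Lemma Dsum_bound F (n : 'I_F -> nat) : 0 < F ->
  phi F ((\sum_(a < F) n a) %% F) <= Dsum n.
Proof.
move=> F0.
move Hk: (\sum_(a < F) n a) => K.
elim: K {-2}K (leqnn K) n Hk => [|N IH] K HK n Hk.
  have -> : K = 0 by lia. by rewrite mod0n /phi.
set c := \sum_(a < F) (0 < n a).
pose n' := fun a => n a - (0 < n a).
have Hsum : \sum_(a < F) n a = \sum_(a < F) n' a + c.
  rewrite /c -big_split /=; apply: eq_bigr => a _; rewrite /n'; case: (n a) => //= x; lia.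
have HD : Dsum n = Dsum n' + \sum_(a < F) \sum_(b < F) ((n a == 0) * (0 < n b)).
  rewrite /Dsum -big_split; apply: eq_bigr => a _; rewrite -big_split; apply: eq_bigr => b _ /=.
  rewrite /n'; case: (n a) => [|x]; case: (n b) => [|y] /=; lia.
have HcF : c <= F.
  rewrite -[F in _ <= F]sum_ord1; apply: leq_sum => a _; by case: (0 < n a).
have Hz : \sum_(a < F) (n a == 0) = F - c.
  have : \sum_(a < F) ((n a == 0) + (0 < n a)) = F.
    rewrite -[RHS]sum_ord1; apply: eq_bigr => a _; by case: (n a).
  rewrite big_split /= -/c; lia.
have HD2 : Dsum n = Dsum n' + c * (F - c).
  rewrite HD; congr (_ + _).
  under eq_bigr do rewrite -big_distrr /=.
  rewrite -big_distrl /= Hz -/c mulnC; lia.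
case: (posnP c) => c0.
  have : forall a, n a = 0.
    move=> a; move/eqP: c0; rewrite sum_nat_eq0 => /forallP /(_ a) /=.
    by case: (n a).
  move=> nz.
  have : K = 0 by rewrite -Hk big1.
  move=> ->; by rewrite mod0n /phi.
have IH' := IH (\sum_(a < F) n' a) _ n' erefl.
rewrite HD2 -Hk Hsum.
rewrite -modnDml.
apply: (leq_trans (phi_step _ _ _)) => //.
  by apply: ltn_pmod.
rewrite /phi in IH' *. rewrite leq_add2r. apply: IH'. lia.
Qed.

Lemma lower (S : finType) F K (R : 'I_F -> 'I_K -> option S) : 0 < F ->
  @is_PDA S F K 1 R -> (F - 1) * K + phi F (K %% F) <= 2 * #|S|.
Proof.
move=> F0 [H2 [H3r [H3c H4]]].
have [e He] : exists e : 'I_K -> 'I_F, forall k j, (R j k == None) = (j == e k).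
  have : forall k, exists x, [set j | R j k == None] = [set x].
    by move=> k; apply/cards1P; rewrite H2.
  case/fin_all_exists => e He; exists e => k j.
  by rewrite -[j == e k]in_set1 -(He k) inE.
pose n := fun a : 'I_F => \sum_(k < K) (e k == a).
have HK : \sum_(a < F) n a = K.
  rewrite /n exchange_big /= -[K in RHS]sum_ord1; apply: eq_bigr => k _.
  rewrite (bigD1 (e k)) //= eqxx big1 // => a; rewrite eq_sym => /negbTE -> //.
pose gt (a b : 'I_F) := (n b < n a) || ((n a == n b) && (b < a)).
have gt_irr a : gt a a = false by rewrite /gt ltnn eqxx ltnn.
have gt_asym a b : gt a b -> gt b a = false.
  rewrite /gt => h; apply/negbTE; move: h; lia.
have gt_id a b : gt a b * n a + gt b a * n b = (a != b) * n a + (n b - n a).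
  case: (eqVneq a b) => [<-|hab]; first by rewrite gt_irr /= subnn.
  have hv : val a != val b by [].
  rewrite /gt /=; move: hv; case: ltngtP => h1; case: ltngtP => h2 //= _; lia.
pose C := [set x : 'I_F * 'I_K | gt (e x.2) x.1].
have HC1 : #|C| = \sum_(j < F) \sum_(k < K) gt (e k) j.
  rewrite -sum1_card big_mkcond /= pair_big /=; apply: eq_bigr => -[j k] _.
  by rewrite inE /=; case: (gt (e k) j).
have HC2 : #|C| = \sum_(a < F) \sum_(b < F) gt a b * n a.
  rewrite HC1 exchange_big /=.
  transitivity (\sum_(k < K) \sum_(a < F) (e k == a) * \sum_(j < F) gt a j).
    apply: eq_bigr => k _; rewrite [RHS](bigD1 (e k)) //= eqxx mul1n [X in _ = _ + X]big1 ?addn0 //.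
    by move=> a; rewrite eq_sym => /negbTE ->.
  rewrite exchange_big /=; apply: eq_bigr => a _.
  rewrite -big_distrl /= mulnC big_distrl /=; apply: eq_bigr => b _; by rewrite mulnC.
have HC3 : 2 * #|C| = (F - 1) * K + Dsum n.
  rewrite mul2n -addnn {1}HC2 HC2 [X in _ + X]exchange_big /= -big_split /=.
  under eq_bigr do rewrite -big_split /=.
  under eq_bigr do under eq_bigr do rewrite gt_id.
  under eq_bigr do rewrite big_split /=.
  rewrite big_split /= /Dsum; congr (_ + _).
  rewrite -HK big_distrr /=; apply: eq_bigr => a _.
  rewrite -big_distrl /=; congr (_ * _).
  have : \sum_(b < F) ((a == b) + (a != b)) = F.
    rewrite -[RHS]sum_ord1; apply: eq_bigr => b _; by case: (a == b).
  rewrite big_split /= (bigD1 a) //= eqxx big1 ?addn0; first lia.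
  by move=> b; rewrite eq_sym => /negbTE ->.
have HCS : #|C| <= #|S|.
  have Hsub : [set R x.1 x.2 | x in C] \subset [set Some t | t in [set: S]].
    apply/subsetP => y /imsetP [x xC ->].
    case E: (R x.1 x.2) => [t|].
      by apply/imsetP; exists t.
    move/eqP: E; rewrite He => /eqP Ex.
    by move: xC; rewrite inE Ex gt_irr.
  have := subset_leq_card Hsub.
  have SI : injective (@Some S) by move=> ? ? [].
  rewrite (card_imset _ SI).
  rewrite cardsT card_in_imset //.
  move=> [j1 k1] [j2 k2]; rewrite !inE /= => g1 g2 Heq.
  case E: (R j1 k1) => [t|]; last first.
    move/eqP: E; rewrite He => /eqP Ex.
    by move: g1; rewrite Ex gt_irr.
  case: (eqVneq (j1, k1) (j2, k2)) => // hne.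
  have [Ea Eb] := H4 j1 j2 k1 k2 t (fun h => (negP hne) (introT eqP h)) E (etrans (esym Heq) E).
  move/eqP: Ea; rewrite He => /eqP Ea.
  move/eqP: Eb; rewrite He => /eqP Eb.
  move: g1 g2; rewrite -Ea -Eb => g1 g2; by rewrite (gt_asym _ _ g2) in g1.
have := Dsum_bound n F0; rewrite HK; lia.
Qed.

Fixpoint base (F c : nat) : nat :=
  if c is c'.+1 then base F c' + (F - 1 - c') else 0.

Lemma base2 F c : c <= F -> 2 * base F c = c * (c - 1) + 2 * c * (F - c).
Proof.
elim: c => [|c IH] hc //=.
rewrite mulnDr IH; last lia.
have [d ->] : exists d, F = c.+1 + d by exists (F - c.+1); lia.
nia.
Qed.

Lemma base_mono F c d : c <= d -> base F c <= base F d.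
Proof.
elim: d => [|d IH] h; first by have -> : c = 0 by lia.
case: (ltnP c d.+1) => h'; last by have -> : c = d.+1 by lia.
by apply: leq_trans (IH _) _ => //=; apply: leq_addr.
Qed.

Lemma idx_lt F x y : x < y -> y < F -> base F x + (y - x - 1) < base F x.+1.
Proof. move=> h1 h2 /=; lia. Qed.

Lemma idx_inj F x y x' y' : x < y -> y < F -> x' < y' -> y' < F ->
  base F x + (y - x - 1) = base F x' + (y' - x' - 1) -> x = x' /\ y = y'.
Proof.
move=> h1 h2 h3 h4 E.
have A := idx_lt h1 h2; have B := idx_lt h3 h4.
case: (ltngtP x x') => h.
- have := base_mono F h; lia.
- have := base_mono F h; lia.
- subst; lia.
Qed.

Section Constr.
Variables F K l i : nat.
Hypotheses (F2 : 2 <= F) (HK : K = l * F + i) (iF : i < F).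

Definition BB := base F F.
Definition m0 := l * BB + base F i.
Definition code (j a q : nat) := q * BB + (base F (minn j a) + (maxn j a - minn j a - 1)).

Lemma idx_ltB j a : j < F -> a < F -> j != a ->
  base F (minn j a) + (maxn j a - minn j a - 1) < BB.
Proof.
move=> hj ha hne.
have h := @idx_lt F (minn j a) (maxn j a) ltac:(lia) ltac:(lia).
have := @base_mono F (minn j a).+1 F ltac:(lia). rewrite /BB; lia.
Qed.

Lemma code_lt (j k : nat) : j < F -> k < K -> j != k %% F -> code j (k %% F) (k %/ F) < m0.
Proof.
move=> hj hk hne.
have F0 : 0 < F by lia.
have ha : k %% F < F by apply: ltn_pmod.
have Hk := divn_eq k F.
have hB := idx_ltB hj ha hne.
rewrite /code /m0.
case: (ltnP (k %/ F) l) => hq.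
  have : k %/ F * BB + BB <= l * BB. by rewrite -mulSnr leq_mul2r hq orbT.
  lia.
have hq' : k %/ F = l.
  apply/eqP; rewrite eqn_leq hq andbT.
  rewrite -ltnS ltn_divLR //; nia.
have hai : k %% F < i by nia.
have h := @idx_lt F (minn j (k %% F)) (maxn j (k %% F)) ltac:(lia) ltac:(lia).
have := @base_mono F (minn j (k %% F)).+1 i ltac:(lia).
rewrite hq'; lia.
Qed.

Lemma code_inj j1 a1 q1 j2 a2 q2 : j1 < F -> a1 < F -> j1 != a1 ->
  j2 < F -> a2 < F -> j2 != a2 -> code j1 a1 q1 = code j2 a2 q2 ->
  q1 = q2 /\ ((j1 = j2 /\ a1 = a2) \/ (j1 = a2 /\ a1 = j2)).
Proof.
move=> h1 h2 h3 h4 h5 h6 E.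
have B0 : 0 < BB by have := idx_ltB h1 h2 h3; lia.
have l1 := idx_ltB h1 h2 h3; have l2 := idx_ltB h4 h5 h6.
have Eq : q1 = q2.
  have := congr1 (divn^~ BB) E; rewrite /code !divnMDl // !divn_small //; lia.
subst q2; split => //.
move: E; rewrite /code => /addnI E.
have [] := @idx_inj F (minn j1 a1) (maxn j1 a1) (minn j2 a2) (maxn j2 a2)
  ltac:(lia) ltac:(lia) ltac:(lia) ltac:(lia) E.
lia.
Qed.

Definition Rc m' (j : 'I_F) (k : 'I_K) : option 'I_m'.+1 :=
  if (j == k %% F :> nat) then None else Some (inord (code j (k %% F) (k %/ F))).

Lemma Rc_PDA m' : m0 = m'.+1 -> @is_PDA _ F K 1 (Rc m').
Proof.
move=> Hm.
have F0 : 0 < F by lia.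
have key : forall (j1 : 'I_F) (k1 : 'I_K) (j2 : 'I_F) (k2 : 'I_K) t,
    Rc m' j1 k1 = Some t -> Rc m' j2 k2 = Some t ->
    k1 %/ F = k2 %/ F /\ ((j1 = j2 :> nat /\ k1 %% F = k2 %% F) \/
                          (j1 = k2 %% F :> nat /\ k1 %% F = j2 :> nat)).
  move=> j1 k1 j2 k2 t; rewrite /Rc.
  case: eqP => // n1 [<-]; case: eqP => // n2 [].
  have c1 := code_lt (ltn_ord j1) (ltn_ord k1) (introN eqP n1).
  have c2 := code_lt (ltn_ord j2) (ltn_ord k2) (introN eqP n2).
  rewrite Hm in c1 c2.
  move/(congr1 val); rewrite /= !inordK // => E.
  apply: (code_inj _ _ _ _ _ _ (esym E)) => //; try (apply/eqP; done);
    try apply: ltn_pmod; done.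
split.
  move=> k.
  have ha : k %% F < F by apply: ltn_pmod.
  apply/eqP/cards1P; exists (Ordinal ha); apply/setP => j.
  rewrite !inE /Rc -(inj_eq val_inj) /=; by case: ifP.
split.
  move=> j k1 k2 t E1 E2.
  have [hq hh] := key _ _ _ _ _ E1 E2.
  apply: val_inj; rewrite /= (divn_eq k1 F) (divn_eq k2 F) hq.
  case: hh => [[_ ->]|[h1 h2]] //; lia.
split.
  move=> j1 j2 k t E1 E2.
  have [hq hh] := key _ _ _ _ _ E1 E2.
  apply: val_inj; case: hh => [[h1 _]|[h1 h2]]; first exact: h1.
  move: E1; rewrite /Rc h1 eqxx //.
move=> j1 j2 k1 k2 t hne E1 E2.
have [hq hh] := key _ _ _ _ _ E1 E2.
case: hh => [[h1 h2]|[h1 h2]].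
  exfalso; apply: hne.
  have -> : j1 = j2 by apply: val_inj.
  have -> // : k1 = k2.
  apply: val_inj; rewrite /= (divn_eq k1 F) (divn_eq k2 F) hq h2 //.
by rewrite /Rc h1 -h2 !eqxx.
Qed.
End Constr.

Lemma even_pred n : 2 %| n * (n - 1).
Proof.
elim: n => // n IH.
have -> : n.+1 * (n.+1 - 1) = n * (n - 1) + 2 * n by case: n {IH} => //= n; nia.
by rewrite dvdn_addl ?IH // dvdn_mulr.
Qed.

Theorem mainTheorem12 (F K l i : nat) :
  2 <= F -> 1 <= K -> K = l * F + i -> i < F ->
  is_min_PDA_size F K 1
    ((l * F * (F - 1)) %/ 2 + (i * (i - 1)) %/ 2 + i * (F - i)).
Proof.
move=> F2 K1 HK iF.
have bF := @base2 F F (leqnn F).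
have bi := @base2 F i (ltnW iF).
have Hm : (l * F * (F - 1)) %/ 2 + (i * (i - 1)) %/ 2 + i * (F - i) = m0 F l i.
  rewrite /m0 /BB.
  have -> : l * F * (F - 1) = (l * base F F) * 2 by nia.
  have -> : i * (i - 1) = (base F i - i * (F - i)) * 2 by nia.
  rewrite !mulnK //; nia.
rewrite Hm.
have pos : 0 < m0 F l i.
  rewrite /m0 /BB; clear Hm; case: l HK => [|l'] HK.
    have := @base_mono F 1 i ltac:(lia); rewrite /= ; lia.
  have := @base_mono F 1 F ltac:(lia); rewrite /=; nia.
split.
  have [m' Em] : exists m', m0 F l i = m'.+1 by exists (m0 F l i).-1; lia.
  rewrite Em; exists (@Rc F K m'); exact: (Rc_PDA F2 HK iF).
move=> S R HP.
have := lower (ltnW F2) HP.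
have -> : K %% F = i by rewrite HK modnMDl modn_small.
rewrite /phi /m0 /BB.
rewrite subnn muln0 addn0 in bF.
have e1 : (F - 1) * K = 2 * (l * base F F) + (F - 1) * i.
  rewrite HK mulnDr; congr (_ + _).
  by rewrite [RHS]mulnCA bF mulnCA [(F - 1) * F]mulnC.
have e2 : (F - 1) * i = i * (i - 1) + i * (F - i).
  have [d ->] : exists d, F = i.+1 + d by exists (F - i.+1); lia.
  clear; case: i => [|i]; first by rewrite !muln0.
  have -> : i.+1.+1 + d - 1 = i.+1 + d by lia.
  have -> : i.+1 - 1 = i by lia.
  have -> : i.+1.+1 + d - i.+1 = d.+1 by lia.
  nia.
lia.
Qed.
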